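(* Let $A=\{(x_k,y_k):k\in[\ell]\}\subset\mathbb N^d$ be finite, $d=m+n$. Then for all $\bar k\in[\ell]$: (a) $\mathbb D_{\mathrm{in}}(x_{\bar k},y_{\bar k},T_F(A))=\mathbb D_{\mathrm{in}}(x_{\bar k},y_{\bar k},Z_F(A))$; (b) $\mathbb D_{\mathrm{out}}(x_{\bar k},y_{\bar k},T_F(A))=\mathbb D_{\mathrm{out}}(x_{\bar k},y_{\bar k},Z_F(A))$.
   Context: $\mathbb N$ is the set of non-negative integers; $[\ell]=\{1,\dots,\ell\}$; $K=\mathbb{R}_+^m\times(-\mathbb{R}_+^n)$. FDH technology $T_F(A)=(A+K)\cap\mathbb{R}_+^d$ and its discrete version $Z_F(A)=(A+K)\cap\mathbb N^d$. Translation distance functions: $\mathbb D_{\mathrm{in}}(x,y,T)=\sup\{\delta\in\mathbb{R}:(x-\delta1\!\!1_m,y)\in T\}$, $\mathbb D_{\mathrm{out}}(x,y,T)=\sup\{\delta\in\mathbb{R}:(x,y+\delta1\!\!1_n)\in T\}$, where $1\!\!1$ denotes a vector of ones. *)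

(* Defs.v *)
From HB Require Import structures.
From mathcomp Require Import all_boot all_order all_algebra.
From mathcomp Require Import all_classical all_reals.
From mathcomp Require Import reals ereal.
Unset Printing Implicit Defensive.
Import Order.TTheory GRing.Theory Num.Theory.
Local Open Scope classical_set_scope.
Local Open Scope ring_scope.

(* A point of R^d, d = m + n, is a pair (x, y) with x : 'I_m -> R (inputs)
   and y : 'I_n -> R (outputs). *)
Definition pt (R : realType) (m n : nat) := (('I_m -> R) * ('I_n -> R))%type.

Definition isNat (R : realType) (r : R) : Prop := exists k : nat, r = k%:R.

(* A + K, with A = {(xs k, ys k) : k in 'I_l} and K = R_+^m x (-R_+^n) *)
Definition AplusK (R : realType) (m n l : nat)
  (xs : 'I_l -> 'I_m -> nat) (ys : 'I_l -> 'I_n -> nat) : set (pt R m n) :=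
  [set p | exists k : 'I_l, exists a : 'I_m -> R, exists b : 'I_n -> R,
     (forall i, 0 <= a i) /\ (forall j, 0 <= b j) /\
     (forall i, p.1 i = (xs k i)%:R + a i) /\
     (forall j, p.2 j = (ys k j)%:R - b j)].

Definition TF (R : realType) (m n l : nat)
  (xs : 'I_l -> 'I_m -> nat) (ys : 'I_l -> 'I_n -> nat) : set (pt R m n) :=
  AplusK R m n l xs ys `&`
  [set p : pt R m n | (forall i, 0 <= p.1 i) /\ (forall j, 0 <= p.2 j)].

Definition ZF (R : realType) (m n l : nat)
  (xs : 'I_l -> 'I_m -> nat) (ys : 'I_l -> 'I_n -> nat) : set (pt R m n) :=
  AplusK R m n l xs ys `&`
  [set p : pt R m n | (forall i, isNat R (p.1 i)) /\ (forall j, isNat R (p.2 j))].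

Definition Din (R : realType) (m n : nat) (x : 'I_m -> R) (y : 'I_n -> R)
  (T : set (pt R m n)) : \bar R :=
  ereal_sup [set (d%:E)%E | d in [set d : R | T ((fun i => x i - d), y)]].

Definition Dout (R : realType) (m n : nat) (x : 'I_m -> R) (y : 'I_n -> R)
  (T : set (pt R m n)) : \bar R :=
  ereal_sup [set (d%:E)%E | d in [set d : R | T (x, (fun j => y j + d))]].

(* Main.v *)
Require Import Defs.
From HB Require Import structures.
From mathcomp Require Import all_boot all_order all_algebra.
From mathcomp Require Import all_classical all_reals.
From mathcomp Require Import ereal.
From mathcomp Require Import lra zify.
Import Order.TTheory GRing.Theory Num.Theory.
Local Open Scope classical_set_scope.
Local Open Scope ring_scope.

Lemma sup_dom (R : realType) (S S' : set R) :
  S `<=` S' -> (forall s, S' s -> exists2 t, S t & s <= t) ->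
  ereal_sup [set (d%:E)%E | d in S'] = ereal_sup [set (d%:E)%E | d in S].
Proof.
move=> sub H; apply/eqP; rewrite eq_le; apply/andP; split.
  apply: ub_ereal_sup => _ [s Hs <-].
  have [t Ht st] := H s Hs.
  apply: (@le_trans _ _ (t%:E)%E); first by rewrite lee_fin.
  by apply: ereal_sup_ubound; exists t.
apply: le_ereal_sup => _ [s Hs <-]; exists s => //; exact: sub.
Qed.

Lemma isNat_int (R : realType) (z : int) : (0 <= z)%R -> isNat R (z%:~R).
Proof. by case: z => [k|k] //= _; exists k. Qed.

Lemma natz_R (R : realType) (k : nat) : (k%:R : R) = (k%:Z)%:~R.
Proof. by []. Qed.

Theorem mainTheorem10 (R : realType) (m n l : nat)
  (xs : 'I_l -> 'I_m -> nat) (ys : 'I_l -> 'I_n -> nat) (kb : 'I_l) :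
  let x := fun i => ((xs kb i)%:R : R) in
  let y := fun j => ((ys kb j)%:R : R) in
  Din R m n x y (TF R m n l xs ys) = Din R m n x y (ZF R m n l xs ys) /\
  Dout R m n x y (TF R m n l xs ys) = Dout R m n x y (ZF R m n l xs ys).
Proof.
move=> x y; split; rewrite /Din /Dout; apply: sup_dom.
- move=> d [HA _]; split => //; split => /= i; rewrite /y ?/x.
  + have [k [a [b [ha [hb [hx hy]]]]]] := HA.
    move: (hx i) => /= hxi.
    apply: (@le_trans _ _ ((xs k i)%:R)); first by [].
    by rewrite hxi lerDl.
  + exact: ler0n.
- move=> d [[k [a [b [ha [hb [hx hy]]]]]] [hp1 hp2]] /=.
  have hc : forall i, Num.ceil d <= (xs kb i)%:Z - (xs k i)%:Z.
    move=> i; rewrite ceil_le_int rmorphB /= -!natz_R.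
    have := hx i; have := ha i; rewrite /x /= => ? ?; lra.
  exists (Num.ceil d)%:~R; last exact: ceil_ge.
  set c := Num.ceil d.
  have hcR : forall i, (c%:~R : R) <= (xs kb i)%:R - (xs k i)%:R.
    by move=> i; rewrite natz_R (natz_R _ (xs k i)) -rmorphB ler_int hc.
  split; last split => /= i.
  - exists k, (fun i => x i - c%:~R - (xs k i)%:R), b; split.
      by move=> i; have := hcR i; rewrite /x; lra.
    split => //; split => // i /=; lra.
  - have -> : x i - c%:~R = ((xs kb i)%:Z - c)%:~R by rewrite rmorphB.
    apply: isNat_int; have := hc i; lia.
  - by exists (ys kb i).
- move=> d [HA [_ HN]]; split => //; split => /= i.
  + exact: ler0n.
  + by have [k /= ->] := HN i; exact: ler0n.
- move=> d [[k [a [b [ha [hb [hx hy]]]]]] [hp1 hp2]] /=.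
  have hc : forall j, Num.ceil d <= (ys k j)%:Z - (ys kb j)%:Z.
    move=> j; rewrite ceil_le_int rmorphB /= -!natz_R.
    have := hy j; have := hb j; rewrite /y /= => ? ?; lra.
  exists (Num.ceil d)%:~R; last exact: ceil_ge.
  set c := Num.ceil d.
  have hcR : forall j, (c%:~R : R) <= (ys k j)%:R - (ys kb j)%:R.
    by move=> j; rewrite natz_R (natz_R _ (ys kb j)) -rmorphB ler_int hc.
  split; last split => /= i.
  - exists k, a, (fun j => (ys k j)%:R - y j - c%:~R); split => //.
    split; first by move=> j; have := hcR j; rewrite /y; lra.
    split => // j /=; lra.
  - by exists (xs kb i).
  - have -> : y i + c%:~R = ((ys kb i)%:Z + c)%:~R by rewrite rmorphD.
    apply: isNat_int; rewrite -(ler0z R) rmorphD /=.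
    have := hp2 i; have := ceil_ge d; rewrite /= -/c /y; lra.
Qed.
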